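(* For $i,j\in\mathbb{N}$ and $m,n\in\mathbb{N}_0$: (1) if $i\le j$ then $d_i(n)\le d_j(n)$; (2) if $i\le j$ and $d_j(m)=d_i(n)$, then $d_j(m)=d_i(m)$.
   Context: For $i\in\mathbb{N}$ and $n\in\mathbb{N}_0$, $d_i(n)=2^{i-1}-\left|(n\bmod 2^i)-2^{i-1}\right|$. *)

(* Defs.v *)
From mathcomp Require Import all_boot all_order all_algebra.
Import GRing.Theory Num.Theory.
Local Open Scope ring_scope.

(* d_i(n) = 2^(i-1) - | (n mod 2^i) - 2^(i-1) |, computed in int.
   Intended for i >= 1 (i in N = {1,2,...}), n in N_0. *)
Definition d (i n : nat) : int :=
  (2 ^ i.-1)%N%:Z - `| ((n %% 2 ^ i)%N%:Z - (2 ^ i.-1)%N%:Z) |.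

(* Main.v *)
Require Import Defs.
From mathcomp Require Import all_boot all_order all_algebra zify.
Import GRing.Theory Num.Theory.
Local Open Scope ring_scope.

Lemma dE i n : (1 <= i)%N -> d i n = (minn (n %% 2^i) (2^i - n %% 2^i))%:Z.
Proof.
move=> hi; rewrite /d.
have hP : (2^i = 2^i.-1 * 2)%N by rewrite -expnSr prednK.
have hr : (n %% 2^i < 2^i)%N by rewrite ltn_mod expn_gt0.
move: hr; rewrite hP.
set h := (2^i.-1)%N; set r := (n %% (h*2))%N.
move=> hr; lia.
Qed.

Lemma key i j m : (1 <= i)%N -> (i <= j)%N ->
  exists P h a b ri, (2^i = P)%N /\ (P = h * 2)%N /\ (0 < h)%N /\ (a < b)%N /\ (ri < P)%N /\
   (m %% 2^j = a * P + ri)%N /\ (2^j = P * b)%N /\ (m %% 2^i = ri)%N.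
Proof.
move=> hi hij.
have hjb : (2^j = 2^i * 2^(j-i))%N by rewrite -expnD subnKC.
have hP : (2^i = 2^i.-1 * 2)%N by rewrite -expnSr prednK.
have Pp : (0 < 2^i)%N by rewrite expn_gt0.
exists (2^i)%N, (2^i.-1)%N, ((m %% 2^j) %/ 2^i)%N, (2^(j-i))%N, ((m %% 2^j) %% 2^i)%N.
split; first by []. split; first by []. split; last split; last split; last split; last split.
- by rewrite expn_gt0.
- rewrite ltn_divLR // mulnC -hjb ltn_mod expn_gt0 //.
- by rewrite ltn_mod.
- exact: divn_eq.
- exact: hjb.
- by rewrite modn_dvdm // hjb dvdn_mulr.

Qed.

Theorem claim10 :
  (forall (i j n : nat), (1 <= i)%N -> (1 <= j)%N -> (i <= j)%N ->
     d i n <= d j n) /\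
  (forall (i j m n : nat), (1 <= i)%N -> (1 <= j)%N -> (i <= j)%N ->
     d j m = d i n -> d j m = d i m).
Proof.
split.
- move=> i j n hi hj hij; rewrite !dE //.
  have [P [h [a [b [ri [HP [h1 [h2 [h3 [h4 [h5 [h6 h7]]]]]]]]]]]] := @key i j n hi hij.
  rewrite h5 h6 h7 HP.
  have [c hc] : exists c, b = (a + c.+1)%N by exists (b - a.+1)%N; lia.
  subst b.
  have -> : (P * (a + c.+1) = a * P + c * P + P)%N by nia.
  move: (a * P)%N (c * P)%N => X Y.
  rewrite lez_nat. lia.
- move=> i j m n hi hj hij; rewrite !dE //.
  have [P [h [a [b [ri [HP [h1 [h2 [h3 [h4 [h5 [h6 h7]]]]]]]]]]]] := @key i j m hi hij.
  have hn : (n %% 2^i < 2^i)%N by rewrite ltn_mod expn_gt0.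
  rewrite h5 h6 h7 HP. move: hn; rewrite HP.
  set rn := (n %% P)%N.
  have [c hc] : exists c, b = (a + c.+1)%N by exists (b - a.+1)%N; lia.
  subst b.
  move=> hn /eqP; rewrite eqz_nat => /eqP He; apply/eqP; rewrite eqz_nat; apply/eqP.
  have hY : (c * P = 0)%N \/ (P <= c * P)%N.
    by destruct c as [|c']; [left; rewrite mul0n | right; rewrite mulSn leq_addr].
  have hX : (a * P = 0)%N \/ (P <= a * P)%N.
    by destruct a as [|a']; [left; rewrite mul0n | right; rewrite mulSn leq_addr].
  move: He.
  have -> : (P * (a + c.+1) = a * P + c * P + P)%N by nia.
  move: hX hY; move: (a * P)%N (c * P)%N => X Y.
  by case=> [->|hX]; case=> [->|hY]; lia.
Qed.
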